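(* Let $\ell$ be a positive integer and $L\ge2$. For every $(p,n,\ell)$-simple-labelling $\tilde M$ of an $L$-graph, $\tilde\Delta(\tilde M)\ge0$.
   Context: An $L$-graph is a cycle with $2L$ vertices and $2L$ edges whose vertices alternate between $n$-vertices and $p$-vertices. A $(p,n,\ell)$-simple-labelling assigns an $n$-label in $[n]$ to each $n$-vertex and to each $p$-vertex either an $\ell$-tuple of elements of $[p]$ or the empty label $\emptyset$, such that: (i) $n$-labels of adjacent $n$-vertices (consecutive $n$-vertices along the cycle, separated by one $p$-vertex) are distinct; (ii) the $p$-labels in an $\ell$-tuple are distinct; (iii) for each $n$-label $i$ and $p$-label $j$, the number of edges whose $n$-endpoint is labelled $i$ and whose $p$-endpoint's tuple contains $j$ is even; (iv) for any two $n$-labels $i,i'$, the number of occurrences of three consecutive vertices labelled $i,\emptyset,i'$ equals the number of occurrences of three consecutive vertices labelled $i',\emptyset,i$. Let $\tilde k$ be the number of $p$-vertices with non-empty label, $\tilde r$ the number of distinct $n$-labels and $\tilde c$ the number of distinct $p$-labels. The excess is $\tilde\Delta(\tilde M)=\frac{L+\tilde k}2+1-\tilde r-\frac{\tilde c}{\ell}$. *)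

(* Defs.v *)
From mathcomp Require Import all_boot all_order all_algebra.
Set Implicit Arguments. Unset Strict Implicit. Unset Printing Implicit Defensive.
Import Order.TTheory GRing.Theory Num.Theory.

(* An L-graph: a cycle  n_0 - p_0 - n_1 - p_1 - ... - n_{L-1} - p_{L-1} - n_0
   with 2L vertices. The n-vertices and the p-vertices are both indexed by 'I_L;
   p-vertex j is adjacent to n-vertex j and n-vertex (j+1 mod L) = ordS j.
   Its 2L edges are (n_j, p_j) and (n_{j+1}, p_j), j : 'I_L.

   A (p,n,l)-labelling: nl : 'I_L -> 'I_n  (n-labels in [n], 0-based),
   pl : 'I_L -> option (l.-tuple 'I_p)  (None = the empty label). *)

Section Labelling.
Variables (p n l L : nat).
Variables (nl : 'I_L -> 'I_n) (pl : 'I_L -> option (l.-tuple 'I_p)).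

Definition plab_has (j : 'I_L) (b : 'I_p) : bool :=
  if pl j is Some t then b \in t else false.

Definition edge_count (a : 'I_n) (b : 'I_p) : nat :=
  \sum_(j : 'I_L | plab_has j b) ((nl j == a) + (nl (ordS j) == a)).

(* number of occurrences of three consecutive vertices labelled a, (empty), a'
   (read along the fixed orientation of the cycle) *)
Definition empty_pattern_count (a a' : 'I_n) : nat :=
  #|[set j : 'I_L | (pl j == None) && (nl j == a) && (nl (ordS j) == a')]|.

Definition simple_labelling : Prop :=
  [/\ (forall j : 'I_L, nl j != nl (ordS j)),
      (forall j : 'I_L, forall t, pl j = Some t -> uniq t),
      (forall (a : 'I_n) (b : 'I_p), ~~ odd (edge_count a b)) &
      (forall a a' : 'I_n, empty_pattern_count a a' = empty_pattern_count a' a)].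

Definition k_tilde : nat := #|[set j : 'I_L | pl j != None]|.
Definition r_tilde : nat := #|[set nl j | j : 'I_L]|.
Definition c_tilde : nat := #|[set b : 'I_p | [exists j : 'I_L, plab_has j b]]|.

Definition excess : rat :=
  ((L + k_tilde)%:R / 2%:R + 1 - r_tilde%:R - c_tilde%:R / l%:R)%R.

End Labelling.

(* Main.v *)
Require Import Defs.
From mathcomp Require Import all_boot all_order all_algebra zify.
Set Implicit Arguments. Unset Strict Implicit. Unset Printing Implicit Defensive.
Import Order.TTheory GRing.Theory Num.Theory.
Local Open Scope ring_scope.

Lemma F2_addxx (x : 'F_2) : x + x = 0.
Proof. by case: x => [[|[|//]]] ?; apply/val_inj. Qed.

Lemma F2_nat k : (k%:R : 'F_2) = (odd k)%:R.
Proof. by rewrite -Fp_nat_mod // modn2. Qed.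

Lemma col_witness (F : fieldType) m N (M : 'M[F]_(m,N)) :
  exists g : 'I_(\rank M) -> 'I_N, forall v : 'rV_N,
    (v <= M)%MS -> (forall i, v 0 (g i) = 0) -> v = 0.
Proof.
rewrite -mxrank_tr.
pose f := maxrankfun M^T.
exists f => v /submxP [u ->] Hv.
have /submxP [K HK] : (M^T <= rowsub f M^T)%MS by rewrite eq_maxrowsub.
have HM : M = (rowsub f M^T)^T *m K^T by rewrite -trmx_mul -HK trmxK.
have H0 : u *m (rowsub f M^T)^T = 0.
  apply/rowP => i; rewrite [RHS]mxE; transitivity ((u *m M) 0 (f i)); last exact: Hv i.
  by rewrite !mxE; apply: eq_bigr => j _; rewrite !mxE.
by rewrite HM mulmxA H0 mul0mx.
Qed.

Section Comb.
Local Open Scope nat_scope.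
Variables (p n l L : nat).
Variables (nl : 'I_L -> 'I_n) (pl : 'I_L -> option (l.-tuple 'I_p)).

Lemma sum_pattern (P : 'I_n -> 'I_n -> bool) :
  #|[set j | (pl j == None) && P (nl j) (nl (ordS j))]| =
  \sum_a \sum_a' P a a' * empty_pattern_count nl pl a a'.
Proof.
have E a a' : empty_pattern_count nl pl a a' =
    \sum_j ((pl j == None) && (nl j == a) && (nl (ordS j) == a') : nat).
  rewrite /empty_pattern_count -sum1dep_card big_mkcond /=.
  by apply: eq_bigr => j _; case: (_ && _).
symmetry.
transitivity (\sum_a \sum_a' \sum_j P a a' *
    ((pl j == None) && (nl j == a) && (nl (ordS j) == a') : nat)).
  by apply: eq_bigr => a _; apply: eq_bigr => a' _; rewrite E big_distrr.
rewrite -sum1dep_card [RHS]big_mkcond /=.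
under eq_bigr => a _ do rewrite exchange_big.
rewrite exchange_big; apply: eq_bigr => j _ /=.
rewrite (bigD1 (nl j)) //= [X in _ + X]big1 => [|a ha]; last first.
  by apply: big1 => a' _; rewrite eq_sym in ha; rewrite (negbTE ha) ?andbF muln0.
rewrite addn0 (bigD1 (nl (ordS j))) //= [X in _ + X]big1 => [|a' ha]; last first.
  by rewrite eq_sym in ha; rewrite (negbTE ha) ?andbF muln0.
by rewrite !eqxx !andbT !addn0; case: (P _ _); case: (pl j == None).
Qed.

Lemma half_empty : (forall j, nl j != nl (ordS j)) ->
  (forall a a', empty_pattern_count nl pl a a' = empty_pattern_count nl pl a' a) ->
  2 * #|[set j | (pl j == None) && (val (nl j) < val (nl (ordS j)))]| =
  #|[set j | pl j == None]|.
Proof.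
move=> h1 h4.
have HB : #|[set j | (pl j == None) && (val (nl (ordS j)) < val (nl j))]| =
          #|[set j | (pl j == None) && (val (nl j) < val (nl (ordS j)))]|.
  rewrite (sum_pattern (fun a a2 => val a2 < val a)) (sum_pattern (fun a a2 => val a < val a2)) exchange_big /=; apply: eq_bigr => a _; apply: eq_bigr => a' _.
  by rewrite h4.
have -> : [set j | pl j == None] =
   [set j | (pl j == None) && (val (nl j) < val (nl (ordS j)))] :|:
   [set j | (pl j == None) && (val (nl (ordS j)) < val (nl j))].
  apply/setP => j; rewrite !inE -andb_orr; case: (pl j == None) => //=.
  have := h1 j; rewrite neq_ltn //.
rewrite cardsU HB.
have -> : [set j | (pl j == None) && (val (nl j) < val (nl (ordS j)))] :&:
   [set j | (pl j == None) && (val (nl (ordS j)) < val (nl j))] = set0.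
  apply/setP => j; rewrite !inE; case: (pl j == None) => //=.
  by apply/negP => /andP [h h']; have := ltn_trans h h'; rewrite ltnn.
by rewrite cards0; lia.
Qed.
End Comb.

Section Main.
Variables (p n l L : nat).
Variables (nl : 'I_L -> 'I_n) (pl : 'I_L -> option (l.-tuple 'I_p)).
Hypothesis hS : simple_labelling nl pl.

Definition ne (j : 'I_L) : bool := pl j != None.
Definition ee (a : 'I_n) : 'rV['F_2]_n := delta_mx 0 a.
Definition xx (j : 'I_L) : 'rV['F_2]_n := ee (nl j) + ee (nl (ordS j)).
Definition XX : 'M['F_2]_(L, n) := \matrix_(j, a) xx j 0 a.
Definition NN : 'M['F_2]_(L, n) := \matrix_(j, a) (if ne j then xx j 0 a else 0).
Definition SS : 'M['F_2]_(p, L) := \matrix_(b, j) (plab_has pl j b)%:R.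
Definition EE : 'M['F_2]_(L, L) := \matrix_(j, j') ((j == j') && ~~ ne j)%:R.
Definition TT := col_mx SS EE.

Lemma rowXX j : row j XX = xx j.
Proof. by apply/rowP => a; rewrite !mxE. Qed.

Lemma plab_ne j b : plab_has pl j b -> ne j.
Proof. by rewrite /plab_has /ne; case: (pl j). Qed.

Lemma TN0 : TT *m NN = 0.
Proof.
case: hS => _ _ h3 _.
rewrite /TT mul_col_mx -col_mx0; congr (col_mx _ _); apply/matrixP => b a; rewrite !mxE.
- have := h3 a b; rewrite /edge_count => /negbTE ev.
  apply: (@eq_trans _ _ ((edge_count nl pl a b)%:R)); last by rewrite F2_nat ev.
  rewrite /edge_count natr_sum [RHS]big_mkcond.
  apply: eq_bigr => j _; rewrite !mxE.
  case hb: (plab_has pl j b); last by rewrite mul0r.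
  by rewrite (plab_ne hb) mul1r natrD !eqxx /= !(eq_sym a).
- rewrite (bigD1 b) //= big1 => [|j hj]; last by rewrite mxE eq_sym (negPf hj) mul0r.
  by rewrite addr0 !mxE eqxx /=; case: (ne b); rewrite /= ?mulr0 ?mul0r.
Qed.

Lemma rank_TN : (\rank TT + \rank NN <= L)%N.
Proof.
have : (TT <= kermx NN)%MS by apply/sub_kermxP; exact: TN0.
move/mxrankS; rewrite mxrank_ker => h.
have := rank_leq_row NN; lia.
Qed.

Lemma wit_exists m N (M : 'M['F_2]_(m,N)) (g : 'I_(\rank M) -> 'I_N) (v : 'rV_N) :
  (forall v : 'rV_N, (v <= M)%MS -> (forall i, v 0 (g i) = 0) -> v = 0) ->
  (v <= M)%MS -> v != 0 -> exists i, v 0 (g i) != 0.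
Proof.
move=> Hg vM vnz; case: (pickP (fun i => v 0 (g i) != 0)) => [i hi|H]; first by exists i.
by move/eqP: vnz; case; apply: Hg => // i; move: (H i) => /= /negbFE /eqP.
Qed.

Lemma step3 : (c_tilde pl + l * #|[set j | pl j == None]| <= l * \rank TT)%N.
Proof.
have [g Hg] := col_witness TT.
set I1 := [set i | ne (g i)].
have He : (#|[set j | pl j == None]| <= #|~: I1|)%N.
  apply: leq_trans (leq_imset_card g (~: I1)); apply: subset_leq_card.
  apply/subsetP => j; rewrite inE => /eqP hj.
  pose v := row (rshift p j) TT.
  have vnz : v != 0.
    apply/eqP => /rowP /(_ j); rewrite mxE col_mxEd !mxE eqxx /ne hj /=.
    by move/eqP; rewrite oner_eq0.
  have [i hi] := wit_exists Hg (row_sub _ _) vnz.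
  move: hi; rewrite mxE col_mxEd mxE.
  move=> hi; have ji : j = g i by apply/eqP; move: hi; case: (j == g i).
  apply/imsetP; exists i => //.
  by rewrite !inE -ji /ne hj.
have Hc : (c_tilde pl <= l * #|I1|)%N.
  rewrite /c_tilde -sum1_card.
  apply: (@leq_trans (\sum_b \sum_(i in I1) (plab_has pl (g i) b : nat))).
    rewrite big_mkcond /=; apply: leq_sum => b _; rewrite inE.
    case: existsP => [[j hj]|] //=.
    pose v := row (lshift L b) TT.
    have vnz : v != 0.
      apply/eqP => /rowP /(_ j); rewrite mxE col_mxEu !mxE hj.
      by move/eqP; rewrite oner_eq0.
    have [i hi] := wit_exists Hg (row_sub _ _) vnz.
    move: hi; rewrite mxE col_mxEu mxE.
    case hb: (plab_has pl (g i) b) => // _.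
    rewrite (bigD1 i) ?hb //= inE; exact: plab_ne hb.
  rewrite exchange_big /= mulnC -sum_nat_const; apply: leq_sum => i _.
  rewrite /plab_has; case: (pl (g i)) => [t|]; last by rewrite big1.
  rewrite big_mkcond /=.
  apply: (@leq_trans #|t|); last by apply: leq_trans (card_size t) _; rewrite size_tuple.
  rewrite -sum1_card [X in (_ <= X)%N]big_mkcond /=; apply: leq_sum => b _; by case: (b \in t).
have Hr : (#|I1| + #|~: I1| = \rank TT)%N by rewrite cardsC card_ord.
rewrite -Hr mulnDr; apply: leq_add => //; exact: leq_mul.
Qed.

Lemma vv0 (v : 'rV['F_2]_n) : v + v = 0.
Proof. by apply/rowP => a; rewrite !mxE F2_addxx. Qed.

Lemma step4 : (\rank XX <=
   \rank NN + #|[set j | (pl j == None) && (val (nl j) < val (nl (ordS j)))]|)%N.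
Proof.
case: hS => h1 _ _ h4.
set A := [set j | _].
pose h := fun i : 'I_#|A| => enum_val i.
have sub : (XX <= NN + rowsub h XX)%MS.
  apply/row_subP => j; rewrite rowXX.
  case hne: (ne j).
    apply: submx_trans (addsmxSl _ _); apply: (eq_row_sub j).
    by apply/rowP => a; rewrite !mxE hne.
  have hj : pl j == None by move: hne; rewrite /ne; case: (pl j).
  suff [j' hj'A hx] : exists2 j', j' \in A & xx j' = xx j.
    apply: submx_trans (addsmxSr _ _); apply: (eq_row_sub (enum_rank_in hj'A j')).
    by rewrite row_rowsub rowXX /h enum_rankK_in.
  case: (ltngtP (nl j) (nl (ordS j))) => hlt.
  - by exists j => //; rewrite inE hj hlt.
  - have : (0 < empty_pattern_count nl pl (nl j) (nl (ordS j)))%N.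
      by rewrite card_gt0; apply/set0Pn; exists j; rewrite !inE hj !eqxx.
    rewrite h4 card_gt0 => /set0Pn [j']; rewrite inE => /andP[/andP[e1 /eqP e2] /eqP e3].
    exists j'; first by rewrite inE e1 e2 e3 hlt.
    by rewrite /xx e2 e3 addrC.
  - by move: (h1 j); rewrite -val_eqE /= hlt eqxx.
apply: leq_trans (mxrankS sub) _.
have [le _] := mxrank_adds_leqif NN (rowsub h XX).
apply: leq_trans le _; rewrite leq_add2l; exact: rank_leq_row.
Qed.

Lemma step6 : (0 < L)%N -> (r_tilde nl <= \rank XX + 1)%N.
Proof.
move=> hL0.
pose j0 : 'I_L := Ordinal hL0.
pose W := (XX + ee (nl j0))%MS.
have Hk : forall k (hk : (k < L)%N), (ee (nl (Ordinal hk)) <= W)%MS.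
  elim => [|k IH] hk.
    have -> : Ordinal hk = j0 by apply: val_inj.
    exact: addsmxSr.
  have hk' : (k < L)%N by apply: ltnW.
  have e : ordS (Ordinal hk') = Ordinal hk by apply: val_inj; rewrite /= modn_small.
  have -> : ee (nl (Ordinal hk)) = xx (Ordinal hk') + ee (nl (Ordinal hk')).
    by rewrite /xx e addrAC vv0 add0r.
  apply: addmx_sub; last exact: IH.
  apply: submx_trans (addsmxSl _ _); rewrite -rowXX; exact: row_sub.
have [g Hg] := col_witness W.
have : [set nl j | j : 'I_L] \subset [set g i | i : 'I_(\rank W)].
  apply/subsetP => a /imsetP [j _ ->].
  have vW : (ee (nl j) <= W)%MS.
    by have := Hk _ (ltn_ord j); rewrite (_ : Ordinal _ = j) //; exact: val_inj.
  have vnz : ee (nl j) != 0.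
    by apply/eqP => /rowP /(_ (nl j)); rewrite !mxE !eqxx /= => /eqP; rewrite oner_eq0.
  have [i hi] := wit_exists Hg vW vnz.
  apply/imsetP; exists i => //; apply/eqP.
  by move: hi; rewrite /ee !mxE eqxx /= [g i == _]eq_sym; case: (nl j == g i); rewrite /= ?eqxx.
move/subset_leq_card => H; rewrite /r_tilde; apply: leq_trans H _.
apply: leq_trans (leq_imset_card _ _) _; rewrite card_ord.
have [le _] := mxrank_adds_leqif XX (ee (nl j0)).
apply: leq_trans le _; rewrite leq_add2l; exact: rank_leq_row.
Qed.
End Main.

From mathcomp Require Import ring lra.
Unset Implicit Arguments.
Local Close Scope ring_scope.

Theorem lemma3p13 (p n l L : nat) (hl : (0 < l)%N) (hL : (2 <= L)%N)
  (nl : 'I_L -> 'I_n) (pl : 'I_L -> option (l.-tuple 'I_p)) :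
  simple_labelling nl pl -> (0 <= excess nl pl)%R.
Proof.
move=> hS.
have H1 := step3 pl.
have H2 := rank_TN hS.
have H3 := step4 hS.
have H4 : (2 * #|[set j | (pl j == None) && (val (nl j) < val (nl (ordS j)))]| =
  #|[set j | pl j == None]|)%N.
  by case: hS => h1 _ _ h4; apply: half_empty.
have H5 := step6 nl (ltn_trans (isT : (0 < 1)%N) hL).
have H6 : (k_tilde pl + #|[set j | pl j == None]| = L)%N.
  rewrite /k_tilde -[RHS](card_ord L) -(cardsC [set j | pl j != None]); congr (_ + _)%N.
  by apply: eq_card => j; rewrite !inE negbK.
move: H1 H2 H3 H4 H5 H6.
set e := #|[set j | pl j == None]|.
set a := #|[set j | _ && _]|.
set rT := \rank (TT pl); set rN := \rank (NN nl pl); set rX := \rank (XX nl).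
move=> H1 H2 H3 H4 H5 H6.
have Hn : (2 * c_tilde pl + 2 * l * r_tilde nl <= l * (L + k_tilde pl) + 2 * l)%N.
  have := leq_mul (leqnn l) H5; have := leq_mul (leqnn l) H3; have := leq_mul (leqnn l) H2.
  have := congr1 (muln l) H4; have := congr1 (muln l) H6.
  rewrite !mulnDr; nia.
rewrite /excess.
set k := k_tilde pl; set r := r_tilde nl; set c := c_tilde pl.
have lpos : (0 < l%:R :> rat)%R by rewrite ltr0n.
have E : ((2 * l)%:R * (((L + k)%:R / 2%:R + 1 - r%:R - c%:R / l%:R)) =
  (l * (L + k) + 2 * l)%:R - (2 * c + 2 * l * r)%:R :> rat)%R.
  rewrite !natrD !natrM; field; by rewrite pnatr_eq0 -lt0n.
rewrite -(pmulr_rge0 _ (_ : (0 < (2 * l)%:R :> rat)%R)); last by rewrite ltr0n muln_gt0.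
by rewrite E subr_ge0 ler_nat.
Qed.
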